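(* Let $1\to N\to\Gamma\to Q\to 1$ be an extension of finitely generated groups such that $N$ and $Q$ are infinite and $N$ is an acentral subgroup of $\Gamma$. Then $\Gamma$ is not presentable by a product.
   Context: A subgroup $A$ of a group $\Gamma$ is called acentral if for every $g\in A\setminus\{1\}$ the centraliser $C_\Gamma(g)$ is contained in $A$. An infinite group $\Gamma$ is not presentable by a product if for every homomorphism $\varphi\colon \Gamma_1\times\Gamma_2\to\Gamma$ whose image has finite index in $\Gamma$, at least one of $\varphi(\Gamma_1)$, $\varphi(\Gamma_2)$ is finite. *)

(* Defs.v *)
From Stdlib Require Import List.
Import ListNotations.
Set Implicit Arguments.

Record group := Group {
  carrier :> Type;
  gop : carrier -> carrier -> carrier;
  ginv : carrier -> carrier;
  gone : carrier;
  gop_assoc : forall x y z, gop x (gop y z) = gop (gop x y) z;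
  gop_1l : forall x, gop gone x = x;
  gop_Vl : forall x, gop (ginv x) x = gone
}.

Arguments gop {g}.
Arguments ginv {g}.
Arguments gone {g}.

Definition prod_group (G1 G2 : group) : group.
Proof.
  refine (@Group (G1 * G2)%type
    (fun x y => (gop (fst x) (fst y), gop (snd x) (snd y)))
    (fun x => (ginv (fst x), ginv (snd x)))
    (gone, gone) _ _ _).
  - intros [a b] [c d] [e f]; simpl; now rewrite !gop_assoc.
  - intros [a b]; simpl; now rewrite !gop_1l.
  - intros [a b]; simpl; now rewrite !gop_Vl.
Defined.

Definition is_hom (G H : group) (f : G -> H) : Prop :=
  forall x y : G, f (gop x y) = gop (f x) (f y).

Definition finite_set (T : Type) (S : T -> Prop) : Prop :=
  exists l : list T, forall x, S x -> In x l.

Definition infinite_group (G : group) : Prop :=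
  ~ finite_set (fun _ : G => True).

Inductive generated (G : group) (S : list G) : G -> Prop :=
| gen_base : forall x, In x S -> @generated G S x
| gen_one : @generated G S gone
| gen_op : forall x y, @generated G S x -> @generated G S y -> @generated G S (gop x y)
| gen_inv : forall x, @generated G S x -> @generated G S (ginv x).

Definition finitely_generated (G : group) : Prop :=
  exists S : list G, forall x, @generated G S x.

Definition image (A B : Type) (f : A -> B) : B -> Prop :=
  fun y => exists x, f x = y.

Definition finite_index (G : group) (H : G -> Prop) : Prop :=
  exists l : list G, forall x : G, exists g h, In g l /\ H h /\ x = gop g h.

Definition acentral (G : group) (A : G -> Prop) : Prop :=
  forall g : G, A g -> g <> gone ->
    forall h : G, gop h g = gop g h -> A h.

Definition not_presentable_by_product (G : group) : Prop :=
  infinite_group G /\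
  forall (G1 G2 : group) (phi : prod_group G1 G2 -> G),
    @is_hom (prod_group G1 G2) G phi ->
    @finite_index G (image phi) ->
    finite_set (image (fun x : G1 => phi (x, gone))) \/
    finite_set (image (fun y : G2 => phi (gone, y))).

(* Main.v *)
Require Import Defs.
From Stdlib Require Import List Classical.
Import ListNotations.

Lemma gcancel {G : group} (x y z : G) : gop x y = gop x z -> y = z.
Proof.
  intro H. rewrite <- (gop_1l _ y), <- (gop_1l _ z), <- (gop_Vl _ x), <- !gop_assoc, H. reflexivity.
Qed.

Lemma gmulr1 {G : group} (x : G) : gop x gone = x.
Proof.
  apply (gcancel (ginv x)). rewrite gop_assoc, gop_Vl, gop_1l. reflexivity.
Qed.

Lemma gmulrV {G : group} (x : G) : gop x (ginv x) = gone.
Proof.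
  apply (gcancel (ginv x)). rewrite gop_assoc, gop_Vl, gop_1l, gmulr1. reflexivity.
Qed.

Lemma hom1 {G H : group} (f : G -> H) : @is_hom G H f -> f gone = gone.
Proof.
  intro Hf. apply (gcancel (f gone)). rewrite <- Hf, gop_1l, gmulr1. reflexivity.
Qed.

Lemma homV {G H : group} (f : G -> H) x : @is_hom G H f -> f (ginv x) = ginv (f x).
Proof.
  intro Hf. apply (gcancel (f x)). rewrite <- Hf, !gmulrV. apply hom1; auto.
Qed.

Lemma finite_mono (T : Type) (S S' : T -> Prop) :
  finite_set S -> (forall x, S' x -> S x) -> finite_set S'.
Proof. intros [l Hl] H. exists l. auto. Qed.

Lemma finite_preimage (A B : Type) (f : A -> B) (S : B -> Prop) :
  finite_set S -> (forall x y, f x = f y -> x = y) -> finite_set (fun x => S (f x)).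
Proof.
  intros [l Hl] Hinj.
  assert (H : exists l' : list A, forall x, In (f x) l -> In x l').
  { clear Hl. induction l as [|y l [l' IH]].
    - exists []. intros x [].
    - destruct (classic (exists x, f x = y)) as [[x0 Hx0]|Hn].
      + exists (x0 :: l'). intros x [Hx|Hx]; [left|right; auto].
        apply Hinj. congruence.
      + exists l'. intros x [Hx|Hx]; auto. exfalso; apply Hn; eauto. }
  destruct H as [l' Hl']. exists l'. intros x Hx. apply Hl', Hl, Hx.
Qed.

Lemma finite_union (I T : Type) (l : list I) (S : I -> T -> Prop) :
  (forall g x y, S g x -> S g y -> x = y) ->
  finite_set (fun x => exists g, In g l /\ S g x).
Proof.
  intro Hs. induction l as [|g l [l' IH]].
  - exists []. intros x [g [[] _]].
  - destruct (classic (exists x, S g x)) as [[x0 Hx0]|Hn].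
    + exists (x0 :: l'). intros x [g' [[<-|Hin] Hx]].
      * left. eapply Hs; eauto.
      * right. apply IH. eauto.
    + exists l'. intros x [g' [[<-|Hin] Hx]].
      * exfalso; eauto.
      * apply IH; eauto.
Qed.

Theorem corollary3p3 (N Gamma Q : group) (i : N -> Gamma) (p : Gamma -> Q) :
  @is_hom N Gamma i -> @is_hom Gamma Q p ->
  (forall x y, i x = i y -> x = y) ->
  (forall q : Q, exists g, p g = q) ->
  (forall g : Gamma, p g = gone <-> exists n, i n = g) ->
  finitely_generated N -> finitely_generated Gamma -> finitely_generated Q ->
  infinite_group N -> infinite_group Q ->
  @acentral Gamma (image i) ->
  not_presentable_by_product Gamma.
Proof.
  intros Hi Hp Hinj Hsurj Hex _ _ _ infN infQ Hac.
  split.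
  { intro Hfin. apply infN.
    exact (@finite_preimage _ _ i (fun _ : Gamma => True) Hfin Hinj). }
  intros G1 G2 phi Hphi [l Hl].
  set (a := fun x : G1 => phi (x, gone)).
  set (b := fun y : G2 => phi (gone, y)).
  assert (Hsplit : forall x y, phi (x, y) = gop (a x) (b y)).
  { intros x y. unfold a, b. rewrite <- Hphi. simpl.
    rewrite gmulr1, gop_1l. reflexivity. }
  assert (Hsplit' : forall x y, phi (x, y) = gop (b y) (a x)).
  { intros x y. unfold a, b. rewrite <- Hphi. simpl.
    rewrite gmulr1, gop_1l. reflexivity. }
  assert (Hcomm : forall x y, gop (a x) (b y) = gop (b y) (a x)).
  { intros. rewrite <- Hsplit, <- Hsplit'. reflexivity. }
  assert (Nmul : forall u v, image i u -> image i v -> image i (gop u v)).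
  { intros u v [n <-] [m <-]. exists (gop n m). apply Hi. }
  assert (Ninv : forall u, image i u -> image i (ginv u)).
  { intros u [n <-]. exists (ginv n). apply homV; auto. }
  apply NNPP; intro Hnot; apply not_or_and in Hnot as [HA HB].
  assert (HA1 : exists x0, a x0 <> gone).
  { apply NNPP; intro Hn. apply HA. exists [gone]. intros z [x <-].
    left. apply NNPP; intro H'. apply Hn. exists x. auto. }
  assert (HB1 : exists y0, b y0 <> gone).
  { apply NNPP; intro Hn. apply HB. exists [gone]. intros z [x <-].
    left. apply NNPP; intro H'. apply Hn. exists x. auto. }
  destruct HA1 as [x0 Hx0]. destruct HB1 as [y0 Hy0].
  assert (Qfin : (forall x, image i (a x)) -> (forall y, image i (b y)) -> False).
  { intros HAN HBN. apply infQ. exists (map p l). intros q _.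
    destruct (Hsurj q) as [g <-].
    destruct (Hl g) as [g0 [h [Hin [[[y1 y2] <-] ->]]]].
    rewrite Hp, Hsplit, Hp.
    assert (E1 : p (a y1) = gone) by (apply Hex; apply HAN).
    assert (E2 : p (b y2) = gone) by (apply Hex; apply HBN).
    rewrite E1, E2, gop_1l, gmulr1. apply in_map; auto. }
  assert (CA : forall x, image i (a x) -> a x = gone).
  { intros x Hx. apply NNPP; intro Hne.
    assert (HBN : forall y, image i (b y)).
    { intro y. apply (Hac (a x) Hx Hne). symmetry; apply Hcomm. }
    assert (HAN : forall x', image i (a x')).
    { intro x'. apply (Hac (b y0) (HBN y0) Hy0). apply Hcomm. }
    auto. }
  assert (CB : forall y, image i (b y) -> b y = gone).
  { intros y Hy. apply NNPP; intro Hne.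
    assert (HAN : forall x, image i (a x)).
    { intro x. apply (Hac (b y) Hy Hne). apply Hcomm. }
    assert (HBN : forall y', image i (b y')).
    { intro y'. apply (Hac (a x0) (HAN x0) Hx0). symmetry; apply Hcomm. }
    auto. }
  apply infN.
  set (S := fun (g : Gamma) (z : Gamma) =>
              image i z /\ exists w, z = gop g (phi w)).
  assert (Hsub : forall g x y, S g x -> S g y -> x = y).
  { intros g z z' [Hz [w Hw]] [Hz' [w' Hw']].
    set (u := phi (gop (ginv w) w')).
    assert (Hu : z' = gop z u).
    { unfold u. rewrite Hw, Hw', <- gop_assoc, <- Hphi,
        (gop_assoc _ w), (@gmulrV (prod_group G1 G2)), gop_1l. reflexivity. }
    assert (HuN : image i u).
    { replace u with (gop (ginv z) z').
      - apply Nmul; auto.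
      - rewrite Hu, gop_assoc, gop_Vl, gop_1l. reflexivity. }
    assert (Hu2 : u = gop (a (fst (gop (ginv w) w'))) (b (snd (gop (ginv w) w')))).
    { unfold u. destruct (gop (ginv w) w'). apply Hsplit. }
    set (v1 := fst (gop (ginv w) w')) in Hu2.
    set (v2 := snd (gop (ginv w) w')) in Hu2.
    assert (Hu1 : u = gone).
    { apply NNPP; intro Hne.
      assert (Ha : image i (a v1)).
      { apply (Hac u HuN Hne). rewrite Hu2, <- (gop_assoc _ (a v1) (b v2) (a v1)), <- Hcomm, gop_assoc.
        reflexivity. }
      rewrite (CA v1 Ha), gop_1l in Hu2.
      rewrite Hu2 in HuN. apply Hne. rewrite Hu2. auto. }
    rewrite Hu, Hu1, gmulr1. reflexivity. }
  pose proof (@finite_union _ _ l S Hsub) as Hf.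
  pose proof (@finite_preimage _ _ i _ Hf Hinj) as Hf'.
  apply (@finite_mono _ _ _ Hf'). intros n _.
  destruct (Hl (i n)) as [g0 [h [Hin [[w <-] E]]]].
  exists g0. split; auto. split.
  - exists n; auto.
  - exists w; auto.
Qed.
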